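(* Let $\lambda_1,\lambda_2,\sigma_1,\sigma_2\in\mathbb{C}^*$ and $\eta_1,\eta_2\in\mathbb{C}$ with $\lambda_1\neq\lambda_2$. Suppose that $V$ is a nonzero $\mathcal{G}$-submodule of $\Omega(\lambda_1,\eta_1,\sigma_1,0)\otimes\Omega(\lambda_2,\eta_2,\sigma_2,0)$. Then $1\otimes 1\in V$.
   Context: The planar Galilean conformal algebra $\mathcal{G}$ is the complex Lie algebra with basis $\{L_m,H_m,I_m,J_m\mid m\in\mathbb{Z}\}$ and brackets $[L_m,L_n]=(n-m)L_{m+n}$, $[L_m,H_n]=nH_{m+n}$, $[L_m,I_n]=(n-m)I_{m+n}$, $[L_m,J_n]=(n-m)J_{m+n}$, $[H_m,I_n]=I_{m+n}$, $[H_m,J_n]=-J_{m+n}$, and $[H_m,H_n]=[I_m,I_n]=[J_m,J_n]=[I_m,J_n]=0$ for all $m,n\in\mathbb{Z}$. For $\lambda,\sigma\in\mathbb{C}^*$, $\eta\in\mathbb{C}$, the module $\Omega(\lambda,\eta,\sigma,0)$ is a polynomial algebra $\mathbb{C}[X,Y]$ with $L_m f(X,Y)=\lambda^m(Y-mX+m\eta)f(X,Y-m)$, $H_m f(X,Y)=\lambda^m X f(X,Y-m)$, $I_m f(X,Y)=\lambda^m\sigma f(X-1,Y-m)$, $J_m f(X,Y)=0$. The tensor product of $\mathcal{G}$-modules has action $x(v\otimes w)=xv\otimes w+v\otimes xw$. *)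

(* Defs.v *)
From HB Require Import structures.
From mathcomp Require Import all_boot all_order all_algebra.
From mathcomp Require Import reals.
From mathcomp Require Import complex.
From mathcomp Require Import mpoly.
Set Implicit Arguments. Unset Strict Implicit. Unset Printing Implicit Defensive.
Import Order.TTheory GRing.Theory Num.Theory.
Local Open Scope ring_scope.

(* The tensor product Omega(l1,e1,s1,0) (x) Omega(l2,e2,s2,0)
   = C[X1,Y1] (x) C[X2,Y2] is identified with C[X1,Y1,X2,Y2] = {mpoly C[4]},
   f(X1,Y1) (x) g(X2,Y2) |-> f(X1,Y1) g(X2,Y2).
   Variables: 'X_0 = X1, 'X_1 = Y1, 'X_2 = X2, 'X_3 = Y2. *)

Section Defs.
Variable R : realType.
Local Notation C := (R[i]).
Local Notation P := {mpoly C[4]}.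

Definition v0 : 'I_4 := @Ordinal 4 0 isT.
Definition v1 : 'I_4 := @Ordinal 4 1 isT.
Definition v2 : 'I_4 := @Ordinal 4 2 isT.
Definition v3 : 'I_4 := @Ordinal 4 3 isT.

Definition shift4 (a1 b1 a2 b2 : C) (F : P) : P :=
  comp_mpoly [tuple 'X_v0 - a1%:MP; 'X_v1 - b1%:MP; 'X_v2 - a2%:MP; 'X_v3 - b2%:MP] F.

(* Action of L_m, H_m, I_m, J_m on the tensor product, x(v(x)w) = xv(x)w + v(x)xw. *)
Definition actL (l1 e1 l2 e2 : C) (m : int) (F : P) : P :=
  (l1 ^ m) *: (('X_v1 - m%:~R *: 'X_v0 + (m%:~R * e1)%:MP) * shift4 0 m%:~R 0 0 F)
  + (l2 ^ m) *: (('X_v3 - m%:~R *: 'X_v2 + (m%:~R * e2)%:MP) * shift4 0 0 0 m%:~R F).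

Definition actH (l1 l2 : C) (m : int) (F : P) : P :=
  (l1 ^ m) *: ('X_v0 * shift4 0 m%:~R 0 0 F)
  + (l2 ^ m) *: ('X_v2 * shift4 0 0 0 m%:~R F).

Definition actI (l1 s1 l2 s2 : C) (m : int) (F : P) : P :=
  (l1 ^ m * s1) *: shift4 1 m%:~R 0 0 F
  + (l2 ^ m * s2) *: shift4 0 0 1 m%:~R F.

Definition actJ (m : int) (F : P) : P := 0.

(* V is a G-submodule of the tensor product: a C-subspace stable under all
   basis elements L_m, H_m, I_m, J_m (hence under all of G). *)
Definition is_submodule (l1 e1 s1 l2 e2 s2 : C) (V : P -> Prop) : Prop :=
  V 0 /\
  (forall F G, V F -> V G -> V (F + G)) /\
  (forall (c : C) F, V F -> V (c *: F)) /\
  (forall m F, V F -> V (actL l1 e1 l2 e2 m F)) /\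
  (forall m F, V F -> V (actH l1 l2 m F)) /\
  (forall m F, V F -> V (actI l1 s1 l2 s2 m F)) /\
  (forall m F, V F -> V (actJ m F)).
End Defs.

(* Main.v *)
Require Import Defs.
From HB Require Import structures.
From mathcomp Require Import all_boot all_order all_algebra.
From mathcomp Require Import reals complex mpoly.
From mathcomp Require Import ring zify.
From Stdlib Require Classical_Prop.
Import GRing.Theory Num.Theory.
Local Open Scope ring_scope.
Set Implicit Arguments. Unset Strict Implicit.
Section T.
Variable R : realType.
Local Notation C := (R[i]).
Variable n : nat.
Local Notation P := {mpoly C[n]}.

Lemma msM (p q : P) : (msize (p * q) <= (msize p + msize q).-1)%N.
Proof.
have [->|p0] := eqVneq p 0; first by rewrite mul0r msize0.
have [->|q0] := eqVneq q 0; first by rewrite mulr0 msize0.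
by rewrite msizeM.
Qed.

Lemma msC (c : C) : (msize (c%:MP : P) <= 1)%N.
Proof. by rewrite msizeC; case: (c != 0). Qed.

Lemma msXj (j : 'I_n) : msize ('X_j : P) = 2.
Proof. by rewrite msizeX mdeg1. Qed.

Lemma msB (p q : P) : (msize (p - q) <= maxn (msize p) (msize q))%N.
Proof. by rewrite -(msizeN q); apply: msizeD_le. Qed.

Variable i : 'I_n.

Lemma dX (j : 'I_n) : ('X_j : P)^`M(i) = ((j == i)%:R)%:MP.
Proof.
rewrite mderivX mnm1E; case: (eqVneq j i) => [->|ne].
  have -> : (U_(i) - U_(i) = 0)%MM by apply/mnmP => k; rewrite mnmBE mnm0E subnn.
  by rewrite mpolyX0 scale1r mpolyC1.
by rewrite scale0r mpolyC0.
Qed.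

Variable c : C.
Variable t : n.-tuple P.
Hypothesis ht : forall j, tnth t j = 'X_j - (c * (j == i)%:R)%:MP.

Definition D (F : P) := F \mPo t - F + c *: F^`M(i).

Lemma tX j : ('X_j : P) \mPo t = 'X_j - (c * (j == i)%:R)%:MP.
Proof. by rewrite comp_mpolyXU -ht (tnth_nth 0). Qed.

Definition Inv (F : P) a := [/\ (msize F <= a.+1)%N, (msize F^`M(i) <= a)%N & (msize (D F) <= a.-1)%N].

Lemma DXj F j : D (F * 'X_j) = D F * ('X_j - (c * (j == i)%:R)%:MP) + c *: (F^`M(i) * (c * (j == i)%:R)%:MP).
Proof.
rewrite /D rmorphM /= tX mderivM dX.
rewrite -!mul_mpolyC !mpolyCM.
ring.
Qed.

Lemma InvX F a j : Inv F a -> Inv (F * 'X_j) a.+1.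
Proof.
case=> h1 h2 h3; split.
- apply: leq_trans (msM _ _) _; rewrite msXj; lia.
- rewrite mderivM dX; apply: leq_trans (msizeD_le _ _) _.
  rewrite geq_max; apply/andP; split.
    apply: leq_trans (msM _ _) _; rewrite msXj; lia.
  apply: leq_trans (msM _ _) _; have := msC ((j == i)%:R); move: h1; set s := msize F; set s2 := msize _; lia.
- rewrite DXj /=; apply: leq_trans (msizeD_le _ _) _.
  rewrite geq_max; apply/andP; split.
    have [->|DF0] := eqVneq (D F) 0; first by rewrite mul0r msize0.
    have : msize (D F) != 0%N by rewrite msize_poly_eq0.
    have : (msize ('X_j - (c * (j == i)%:R)%:MP : P) <= 2)%N.
      apply: leq_trans (msB _ _) _; rewrite msXj; have := msC (c * (j == i)%:R); lia.
    move: (msM (D F) ('X_j - (c * (j == i)%:R)%:MP)); lia.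
  apply: leq_trans (msizeZ_le _ _) _.
  apply: leq_trans (msM _ _) _; have := msC (c * (j == i)%:R); lia.
Qed.


Lemma Inv_mono F a b : Inv F a -> (a <= b)%N -> Inv F b.
Proof.
case=> h1 h2 h3 ab; split.
- by apply: leq_trans h1 _.
- by apply: leq_trans h2 _.
- apply: leq_trans h3 _; lia.
Qed.

Lemma Inv1 : Inv 1 0.
Proof.
split.
- by rewrite msize1.
- by rewrite -mpolyC1 mderivC msize0.
- by rewrite /D comp_mpoly1 subrr -mpolyC1 mderivC scaler0 addr0 msize0.
Qed.

Lemma Inv0 a : Inv 0 a.
Proof. by split; rewrite ?mderiv0 /D ?comp_mpoly0 ?mderiv0 ?subrr ?scaler0 ?addr0 msize0. Qed.

Lemma DD F G : D (F + G) = D F + D G.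
Proof. rewrite /D raddfD /= mderivD scalerDr.
move: (F \mPo t) (G \mPo t) (c *: F^`M(i)) (c *: G^`M(i)) => a b u v.
ring.
Qed.

Lemma DZ k F : D (k *: F) = k *: D F.
Proof. by rewrite /D comp_mpolyZ mderivZ !scalerDr scalerN !scalerA mulrC. Qed.

Lemma InvD F G a : Inv F a -> Inv G a -> Inv (F + G) a.
Proof.
case=> f1 f2 f3 [g1 g2 g3]; split.
- by apply: leq_trans (msizeD_le _ _) _; rewrite geq_max f1 g1.
- by rewrite mderivD; apply: leq_trans (msizeD_le _ _) _; rewrite geq_max f2 g2.
- by rewrite DD; apply: leq_trans (msizeD_le _ _) _; rewrite geq_max f3 g3.
Qed.

Lemma InvZ k F a : Inv F a -> Inv (k *: F) a.
Proof.
case=> f1 f2 f3; split.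
- by apply: leq_trans (msizeZ_le _ _) _.
- by rewrite mderivZ; apply: leq_trans (msizeZ_le _ _) _.
- by rewrite DZ; apply: leq_trans (msizeZ_le _ _) _.
Qed.

Lemma InvXn F a j k : Inv F a -> Inv (F * 'X_j ^+ k) (a + k).
Proof.
move=> h; elim: k => [|k IH]; first by rewrite expr0 mulr1 addn0.
by rewrite exprSr mulrA addnS; apply: InvX.
Qed.

Lemma Inv_prod (r : seq 'I_n) (e : 'I_n -> nat) :
  Inv (\prod_(j <- r) 'X_j ^+ e j) (\sum_(j <- r) e j).
Proof.
elim: r => [|j r IH]; first by rewrite !big_nil; exact: Inv1.
by rewrite !big_cons mulrC addnC; apply: InvXn.
Qed.

Lemma Inv_mon m : Inv 'X_[m] (mdeg m).
Proof. by rewrite mpolyXE_id mdegE; apply: Inv_prod. Qed.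

Lemma Inv_all F : Inv F (msize F).-1.
Proof.
rewrite {1}[F]mpolyE big_seq.
apply: (big_ind (fun x => Inv x (msize F).-1)); first exact: Inv0.
  by move=> x y; apply: InvD.
move=> m mF; apply: InvZ; apply: Inv_mono (Inv_mon m) _.
have := msize_mdeg_lt mF; lia.
Qed.

Lemma shift_diff F : (msize (F \mPo t - F) <= (msize F).-1)%N.
Proof.
have [_ h2 h3] := Inv_all F.
have -> : F \mPo t - F = D F - c *: F^`M(i) by rewrite /D addrK.
apply: leq_trans (msB _ _) _; rewrite geq_max; apply/andP; split.
  by apply: leq_trans h3 _; set s := msize F; lia.
by apply: leq_trans (msizeZ_le _ _) _.
Qed.

Lemma shift_le F : (msize (F \mPo t) <= msize F)%N.
Proof.
have -> : F \mPo t = F + (F \mPo t - F) by rewrite addrC subrK.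
apply: leq_trans (msizeD_le _ _) _; rewrite geq_max leqnn /=.
by apply: leq_trans (shift_diff F) _; set s := msize F; lia.
Qed.

Lemma shift_fix F : c != 0 -> F \mPo t = F -> (msize F^`M(i) <= (msize F).-2)%N.
Proof.
move=> c0 fx; have [_ _ h3] := Inv_all F.
move: h3; rewrite /D fx subrr add0r msizeZ //.
Qed.

End T.

Section Const.
Variable R : realType.
Local Notation C := (R[i]).
Variable n : nat.
Local Notation P := {mpoly C[n]}.

Lemma const_of (F : P) : (forall i, msize F^`M(i) <= (msize F).-2)%N -> F = (F@_0)%:MP.
Proof.
move=> hd; apply: msize1_polyC.
have [->|F0] := eqVneq F 0; first by rewrite msize0.
suff ml0 : mlead F = 0%MM by rewrite -mlead_deg // ml0 mdeg0.
apply/mnmP => k; rewrite mnm0E; apply/eqP; apply/negPn/negP => mk.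
set m0 := mlead F in mk *.
pose m := (m0 - U_(k))%MM.
have em : (m + U_(k))%MM = m0.
  apply/mnmP => j; rewrite mnmDE mnmBE mnm1E.
  case: (eqVneq k j) => [<-|_] /=; last by rewrite subn0 addn0.
  by move: mk; rewrite -lt0n => mk; rewrite subnK.
have : m \in msupp (F^`M(k)).
  rewrite mcoeff_msupp mcoeff_mderiv em mulrn_eq0 negb_or /=.
  by rewrite mleadc_eq0.
move/msize_mdeg_lt => h; have := hd k.
have := mlead_deg F0; rewrite -/m0 -em mdegD mdeg1 => e.
move: h; set s := msize F; set s2 := msize _; lia.
Qed.
End Const.



Section Four.
Variable R : realType.
Local Notation C := (R[i]).
Local Notation P := {mpoly C[4]}.

Lemma comp_comp (p : P) (lp lq : 4.-tuple P) :
  (p \mPo lp) \mPo lq = p \mPo [tuple (tnth lp j) \mPo lq | j < 4].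
Proof.
rewrite (comp_mpolyE p lp) (comp_mpolyE p) raddf_sum /=; apply: eq_bigr => m _.
rewrite comp_mpolyZ rmorph_prod /=; congr (_ *: _); apply: eq_bigr => j _.
by rewrite rmorphXn tnth_mktuple.
Qed.

Lemma ord4P (j : 'I_4) : [\/ j = v0, j = v1, j = v2 | j = v3].
Proof.
case: j => [[|[|[|[|k]]]] hk]; [apply: Or41|apply: Or42|apply: Or43|apply: Or44|by []];
  exact/val_inj.
Qed.

Section T4.
Variable T : Type.
Variables x0 x1 x2 x3 : T.
Lemma tn0 : tnth [tuple x0; x1; x2; x3] v0 = x0. Proof. by []. Qed.
Lemma tn1 : tnth [tuple x0; x1; x2; x3] v1 = x1. Proof. by []. Qed.
Lemma tn2 : tnth [tuple x0; x1; x2; x3] v2 = x2. Proof. by []. Qed.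
Lemma tn3 : tnth [tuple x0; x1; x2; x3] v3 = x3. Proof. by []. Qed.
End T4.
End Four.

Section Four2.
Variable R : realType.
Local Notation C := (R[i]).
Local Notation P := {mpoly C[4]}.

Lemma cXt (j : 'I_4) (t : 4.-tuple P) : 'X_j \mPo t = tnth t j.
Proof. by rewrite comp_mpolyXU (tnth_nth 0). Qed.

Lemma sh_comp (a b c d a' b' c' d' : C) (F : P) :
  shift4 a b c d (shift4 a' b' c' d' F) = shift4 (a + a') (b + b') (c + c') (d + d') F.
Proof.
rewrite /shift4 comp_comp.
match goal with |- comp_mpoly ?x _ = comp_mpoly ?y _ => have -> : x = y end; last by [].
apply: eq_from_tnth => j; rewrite tnth_mktuple.
by case: (ord4P j) => ->; rewrite ?tn0 ?tn1 ?tn2 ?tn3 comp_mpolyB cXt comp_mpolyC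
  ?tn0 ?tn1 ?tn2 ?tn3 mpolyCD opprD addrA.
Qed.

Lemma sh_id (F : P) : shift4 0 0 0 0 F = F.
Proof.
rewrite /shift4 -[RHS]comp_mpoly_id.
match goal with |- comp_mpoly ?x _ = comp_mpoly ?y _ => have -> : x = y end; last by [].
apply: eq_from_tnth => j.
rewrite tnth_mktuple mpolyC0.
by case: (ord4P j) => ->; rewrite ?tn0 ?tn1 ?tn2 ?tn3 subr0.
Qed.

Lemma sh_lin (a b c d k : C) (x y : P) :
  shift4 a b c d (k *: x + y) = k *: shift4 a b c d x + shift4 a b c d y.
Proof. by rewrite /shift4 raddfD /= comp_mpolyZ. Qed.

Lemma ht_gen (i : 'I_4) (cc a b c d : C) :
  a = cc * (v0 == i)%:R -> b = cc * (v1 == i)%:R -> c = cc * (v2 == i)%:R -> d = cc * (v3 == i)%:R ->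
  forall j, tnth [tuple 'X_v0 - a%:MP; 'X_v1 - b%:MP; 'X_v2 - c%:MP; 'X_v3 - d%:MP] j
            = 'X_j - (cc * (j == i)%:R)%:MP.
Proof.
by move=> -> -> -> -> j; case: (ord4P j) => ->; rewrite ?tn0 ?tn1 ?tn2 ?tn3.
Qed.

End Four2.



Section Sep.
Variable R : realType.
Local Notation C := (R[i]).
Local Notation P := {mpoly C[4]}.
Variable W : P -> Prop.
Hypothesis hW0 : W 0.
Hypothesis hWD : forall x y, W x -> W y -> W (x + y).
Hypothesis hWZ : forall (k : C) x, W x -> W (k *: x).
Variables (l m : C).
Hypothesis lm : l != m.
Hypothesis m0 : m != 0.
Variables (T U : P -> P).
Hypothesis hTl : forall (k : C) x y, T (k *: x + y) = k *: T x + T y.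
Hypothesis hUl : forall (k : C) x y, U (k *: x + y) = k *: U x + U y.
Hypothesis hTd : forall x, (msize (T x - x) <= (msize x).-1)%N.
Hypothesis hUd : forall x, (msize (U x - x) <= (msize x).-1)%N.
Hypothesis hUle : forall x, (msize (U x) <= msize x)%N.

Definition islin (f : P -> P) := forall (k : C) x y, f (k *: x + y) = k *: f x + f y.

Lemma lin0 f : islin f -> f 0 = 0.
Proof.
move=> h; have := h 1 0 0; rewrite !scale1r addr0.
move=> /(congr1 (fun z => z - f 0)); rewrite subrr addrK => e'; exact: (esym e').
Qed.

Lemma linZ f : islin f -> forall (k : C) x, f (k *: x) = k *: f x.
Proof. by move=> h k x; have := h k x 0; rewrite (lin0 h) !addr0. Qed.

Lemma linD f : islin f -> forall x y, f (x + y) = f x + f y.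
Proof. by move=> h x y; have := h 1 x y; rewrite !scale1r. Qed.

Lemma linB f : islin f -> forall x y, f (x - y) = f x - f y.
Proof. by move=> h x y; rewrite linD // -scaleN1r linZ // scaleN1r. Qed.

Lemma iterL f : islin f -> forall k, islin (iter k f).
Proof. by move=> h; elim=> [//|k IH] c x y /=; rewrite IH h. Qed.

Definition Good A B := forall k : nat, W (l ^+ k *: iter k T A + m ^+ k *: iter k U B).

Definition Phi x := m *: U x - l *: x.

Lemma toC (k : C) (x : P) : k *: x = k%:MP * x.
Proof. by rewrite mul_mpolyC. Qed.

Lemma step1 A B : Good A B -> Good (l *: (T A - A)) (Phi B).
Proof.
move=> g k; have := hWD (g k.+1) (hWZ (- l) (g k)).
have LT := iterL hTl k; have LU := iterL hUl k.
rewrite /Phi (linZ LT) (linB LT) (linB LU) !(linZ LU) !iterSr.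
move: (iter k T (T A)) (iter k T A) (iter k U (U B)) (iter k U B) => a1 a2 b1 b2.
rewrite !toC ?rmorphM ?rmorphXn ?rmorphN /= ?exprS.
move=> h; congr W: h; ring.
Qed.


Lemma msPhi x : (msize (Phi x) <= msize x)%N.
Proof.
apply: leq_trans (msB _ _) _; rewrite geq_max; apply/andP; split.
  by apply: leq_trans (msizeZ_le _ _) _.
exact: msizeZ_le.
Qed.

Lemma msiter k x : (msize (iter k Phi x) <= msize x)%N.
Proof. by elim: k => [//|k IH] /=; apply: leq_trans (msPhi _) IH. Qed.

Lemma iter_kill k : forall A B, (msize A <= k)%N -> Good A B -> Good 0 (iter k Phi B).
Proof.
elim: k => [|k IH] A B hA g.
  by move: hA; rewrite leqn0 msize_poly_eq0 => /eqP A0; rewrite -A0.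
rewrite iterSr; apply: (IH (l *: (T A - A))); last exact: step1.
apply: leq_trans (msizeZ_le _ _) _; apply: leq_trans (hTd _) _.
move: hA; set s := msize A; lia.
Qed.

Lemma good0 B : Good 0 B -> W (m *: (U B - B)).
Proof.
move=> g; have := hWD (g 1%N) (hWZ (- m) (g 0%N)).
rewrite /= (lin0 hTl) expr1 expr0 !scaler0 !add0r scale1r => h.
congr W: h; rewrite !toC; ring.
Qed.

Lemma Phi_inj y : Phi y = 0 -> y = 0.
Proof.
move=> e; apply/eqP; apply/negPn/negP => y0.
have : (m - l) *: y + m *: (U y - y) = 0.
  by rewrite -e /Phi !toC; ring.
move/eqP; rewrite addr_eq0 => /eqP /(congr1 (fun z => msize z)).
rewrite msizeN msizeZ; last by rewrite subr_eq0 eq_sym.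
move=> e2; have h1 := msizeZ_le (U y - y) m; have h2 := hUd y.
have : msize y != 0%N by rewrite msize_poly_eq0.
move: e2 h1 h2; set s := msize y; set s2 := msize (m *: _); set s3 := msize (U y - y); lia.
Qed.

Lemma back k : forall x, U (iter k Phi x) = iter k Phi x -> U x = x.
Proof.
elim: k => [//|k IH] x; rewrite iterSr => /IH e.
have : Phi (U x - x) = 0.
  move: e; rewrite /Phi (linB hUl) !(linZ hUl) (linB hUl) => /eqP; rewrite -subr_eq0 => /eqP.
  by move=> <-; rewrite !toC; ring.
by move/Phi_inj/eqP; rewrite subr_eq0 => /eqP.
Qed.

Lemma sepU A B N : Good A B -> (forall H, W H -> (msize H < N)%N -> H = 0) ->
  (msize B <= N)%N -> (0 < N)%N -> U B = B.
Proof.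
move=> g hmin hB hN.
have g' := iter_kill (leqnn (msize A)) g.
have w := good0 g'.
move: w; set B' := iter _ Phi B => w.
have : m *: (U B' - B') = 0.
  apply: (hmin _ w); have := msizeZ_le (U B' - B') m.
  have := hUd B'; have := msiter (msize A) B; rewrite -/B'.
  move: hB hN; set s := msize B; set s2 := msize B'; set s3 := msize (U B' - B'); set s4 := msize (m *: _); lia.
move/eqP; rewrite scaler_eq0 (negbTE m0) /= subr_eq0 => /eqP.
exact: back.
Qed.

End Sep.



Section Main.
Variable R : realType.
Local Notation C := (R[i]).
Local Notation P := {mpoly C[4]}.

Lemma sh_Z (a b c d k : C) (x : P) : shift4 a b c d (k *: x) = k *: shift4 a b c d x.
Proof. by rewrite /shift4 comp_mpolyZ. Qed.

Lemma sh_unit_diff (i : 'I_4) (a b c d : C) (F : P) :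
  a = (v0 == i)%:R -> b = (v1 == i)%:R -> c = (v2 == i)%:R -> d = (v3 == i)%:R ->
  (msize (shift4 a b c d F - F) <= (msize F).-1)%N.
Proof.
move=> ha hb hc hd; rewrite /shift4; apply: (@shift_diff _ _ i 1).
by apply: ht_gen; rewrite mul1r.
Qed.

Lemma sh_unit_le (i : 'I_4) (a b c d : C) (F : P) :
  a = (v0 == i)%:R -> b = (v1 == i)%:R -> c = (v2 == i)%:R -> d = (v3 == i)%:R ->
  (msize (shift4 a b c d F) <= msize F)%N.
Proof.
move=> ha hb hc hd; rewrite /shift4; apply: (@shift_le _ _ i 1).
by apply: ht_gen; rewrite mul1r.
Qed.

Lemma sh_unit_fix (i : 'I_4) (a b c d : C) (F : P) :
  a = (v0 == i)%:R -> b = (v1 == i)%:R -> c = (v2 == i)%:R -> d = (v3 == i)%:R ->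
  shift4 a b c d F = F -> (msize F^`M(i) <= (msize F).-2)%N.
Proof.
move=> ha hb hc hd; rewrite /shift4; apply: (@shift_fix _ _ i 1).
  by apply: ht_gen; rewrite mul1r.
exact: oner_neq0.
Qed.

Definition T1 (x : P) := shift4 0 1 0 0 x.
Definition T2 (x : P) := shift4 0 0 0 1 x.
Definition E1 (x : P) := shift4 1 0 0 0 x.
Definition E2 (x : P) := shift4 0 0 1 0 x.

Lemma T1d x : (msize (T1 x - x) <= (msize x).-1)%N. Proof. by apply: (@sh_unit_diff v1). Qed.
Lemma T2d x : (msize (T2 x - x) <= (msize x).-1)%N. Proof. by apply: (@sh_unit_diff v3). Qed.
Lemma E1d x : (msize (E1 x - x) <= (msize x).-1)%N. Proof. by apply: (@sh_unit_diff v0). Qed.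
Lemma E2d x : (msize (E2 x - x) <= (msize x).-1)%N. Proof. by apply: (@sh_unit_diff v2). Qed.
Lemma T1le x : (msize (T1 x) <= msize x)%N. Proof. by apply: (@sh_unit_le v1). Qed.
Lemma T2le x : (msize (T2 x) <= msize x)%N. Proof. by apply: (@sh_unit_le v3). Qed.
Lemma E1le x : (msize (E1 x) <= msize x)%N. Proof. by apply: (@sh_unit_le v0). Qed.
Lemma E2le x : (msize (E2 x) <= msize x)%N. Proof. by apply: (@sh_unit_le v2). Qed.

Lemma sh_congr (a b c d a' b' c' d' : C) (F : P) : a = a' -> b = b' -> c = c' -> d = d' ->
  shift4 a b c d F = shift4 a' b' c' d' F.
Proof. by move=> -> -> -> ->. Qed.

Lemma iterT1 k x : iter k T1 x = shift4 0 k%:R 0 0 x.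
Proof.
elim: k => [|k IH]; first by rewrite -[LHS]sh_id.
rewrite iterS IH /T1 sh_comp; apply: sh_congr; by rewrite ?addr0 ?mulrS.
Qed.

Lemma iterT2 k x : iter k T2 x = shift4 0 0 0 k%:R x.
Proof.
elim: k => [|k IH]; first by rewrite -[LHS]sh_id.
rewrite iterS IH /T2 sh_comp; apply: sh_congr; by rewrite ?addr0 ?mulrS.
Qed.

Variables (l1 l2 s1 s2 e1 e2 : C).

Lemma iT1 k (G : P) : iter k T1 (s1 *: E1 G) = s1 *: shift4 1 k%:R 0 0 G.
Proof.
rewrite iterT1.
rewrite /E1 sh_Z sh_comp.
have -> : shift4 (0+1) (k%:R+0) (0+0) (0+0) G = shift4 1 k%:R 0 0 G by apply: sh_congr; rewrite ?addr0 ?add0r.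
done.
Qed.

Lemma iT2 k (G : P) : iter k T2 (s2 *: E2 G) = s2 *: shift4 0 0 1 k%:R G.
Proof.
rewrite iterT2.
rewrite /E2 sh_Z sh_comp.
have -> : shift4 (0+0) (0+0) (0+1) (k%:R+0) G = shift4 0 0 1 k%:R G by apply: sh_congr; rewrite ?addr0 ?add0r.
done.
Qed.

Lemma Ik (k : nat) (G : P) : actI l1 s1 l2 s2 k%:Z G =
  l1 ^+ k *: iter k T1 (s1 *: E1 G) + l2 ^+ k *: iter k T2 (s2 *: E2 G).
Proof.
rewrite /actI -!exprnP -!pmulrn.
rewrite -(scalerA (l1 ^+ k)).
rewrite -(scalerA (l2 ^+ k)).
exact: (congr2 (fun a b => l1 ^+ k *: a + l2 ^+ k *: b) (esym (iT1 k G)) (esym (iT2 k G))).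
Qed.


Lemma sh_inv (a b c d : C) (x : P) : shift4 (-a) (-b) (-c) (-d) (shift4 a b c d x) = x.
Proof.
apply: (etrans _ (sh_id x)); rewrite sh_comp; apply: sh_congr; exact: addNr.
Qed.

Lemma sh_inj (a b c d : C) (x y : P) : shift4 a b c d x = shift4 a b c d y -> x = y.
Proof.
move=> e; exact: (etrans (esym (sh_inv a b c d x)) (etrans (congr1 (shift4 (-a) (-b) (-c) (-d)) e) (sh_inv a b c d y))).
Qed.

Lemma T1E1 (x : P) : T1 (E1 x) = E1 (T1 x).
Proof.
rewrite /T1 /E1; apply: (etrans (sh_comp _ _ _ _ _ _ _ _ _)); apply: esym.
apply: (etrans (sh_comp _ _ _ _ _ _ _ _ _)); apply: sh_congr; exact: addrC.
Qed.

Lemma T2E2 (x : P) : T2 (E2 x) = E2 (T2 x).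
Proof.
rewrite /T2 /E2; apply: (etrans (sh_comp _ _ _ _ _ _ _ _ _)); apply: esym.
apply: (etrans (sh_comp _ _ _ _ _ _ _ _ _)); apply: sh_congr; exact: addrC.
Qed.

Lemma T1lin : forall (k : C) (x y : P), T1 (k *: x + y) = k *: T1 x + T1 y.
Proof. by rewrite /T1; exact: sh_lin. Qed.
Lemma T2lin : forall (k : C) (x y : P), T2 (k *: x + y) = k *: T2 x + T2 y.
Proof. by rewrite /T2; exact: sh_lin. Qed.

Lemma fixS (f : P -> P) (s : C) x : s != 0 -> (forall (k : C) (x y : P), f (k *: x + y) = k *: f x + f y) ->
  f (s *: x) = s *: x -> f x = x.
Proof.
move=> s0 hf e; apply: (scalerI s0).
apply: (etrans _ e); apply: esym; have := hf s x 0; rewrite !addr0.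
move=> ->; rewrite -[RHS]addr0; congr (_ + _).
have := hf 1 0 0; rewrite !scale1r !addr0 => /(congr1 (fun z => z - f 0)).
by rewrite subrr addrK.
Qed.

Lemma combo1 (a b : C) (X Y : P) : a *: X + b *: Y + (-b) *: (X + Y) = (a - b) *: X.
Proof. rewrite !toC; ring. Qed.
Lemma combo2 (a b : C) (X Y : P) : a *: X + b *: Y + (-a) *: (X + Y) = (b - a) *: Y.
Proof. rewrite !toC; ring. Qed.
Lemma scaleK' (c : C) (x : P) : c != 0 -> c^-1 *: (c *: x) = x.
Proof. by move=> c0; rewrite scalerA mulVf ?scale1r. Qed.

Variable V : P -> Prop.
Hypothesis hVD : forall x y, V x -> V y -> V (x + y).
Hypothesis hVZ : forall (k : C) x, V x -> V (k *: x).
Hypothesis hVI : forall m F, V F -> V (actI l1 s1 l2 s2 m F).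
Hypotheses (hl1 : l1 != 0) (hl2 : l2 != 0) (hs1 : s1 != 0) (hs2 : s2 != 0) (hl12 : l1 != l2).

Lemma absXY (X Y : P) : (forall k : nat, V (l1 ^+ k *: iter k T1 X + l2 ^+ k *: iter k T2 Y)) ->
  T1 X = X -> T2 Y = Y -> V X /\ V Y.
Proof.
move=> g hT1 hT2.
have I0 : V (X + Y).
  have := g 0%N; change (V (l1 ^+ 0 *: X + l2 ^+ 0 *: Y) -> V (X + Y)).
  by rewrite !expr0 !scale1r.
have I1 : V (l1 *: X + l2 *: Y).
  have := g 1%N; change (V (l1 *: T1 X + l2 *: T2 Y) -> V (l1 *: X + l2 *: Y)).
  by rewrite hT1 hT2.
split.
  have := hVZ (l1 - l2)^-1 (hVD I1 (hVZ (- l2) I0)).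
  by rewrite combo1 scaleK' // subr_eq0.
have := hVZ (l2 - l1)^-1 (hVD I1 (hVZ (- l1) I0)).
by rewrite combo2 scaleK' // subr_eq0 eq_sym.
Qed.

Lemma core G : V G -> G != 0 -> (forall H, V H -> (msize H < msize G)%N -> H = 0) -> V 1.
Proof.
move=> vG G0 hmin.
have N0 : (0 < msize G)%N by rewrite lt0n msize_poly_eq0.
have good1 : Good V l1 l2 T1 T2 (s1 *: E1 G) (s2 *: E2 G).
  by move=> k; exact: (eq_ind _ V (hVI k%:Z vG) _ (Ik k G)).
have good2 : Good V l2 l1 T2 T1 (s2 *: E2 G) (s1 *: E1 G).
  by move=> k; exact: (eq_ind _ V (good1 k) _ (addrC _ _)).
have hT2 : T2 (s2 *: E2 G) = s2 *: E2 G.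
  apply: (sepU hVD hVZ hl12 hl2 T1lin T2lin T1d T2d T2le good1 hmin _ N0).
  exact: (leq_trans (msizeZ_le _ _) (E2le _)).
have hT1 : T1 (s1 *: E1 G) = s1 *: E1 G.
  apply: (sepU hVD hVZ _ hl1 T2lin T1lin T2d T1d T1le good2 hmin _ N0).
    by rewrite eq_sym.
  exact: (leq_trans (msizeZ_le _ _) (E1le _)).
have eT1 : T1 G = G.
  have h := fixS hs1 T1lin hT1.
  apply: (@sh_inj 1 0 0 0); change (E1 (T1 G) = E1 G).
  exact: (etrans (esym (T1E1 G)) h).
have eT2 : T2 G = G.
  have h := fixS hs2 T2lin hT2.
  apply: (@sh_inj 0 0 1 0); change (E2 (T2 G) = E2 G).
  exact: (etrans (esym (T2E2 G)) h).
have [vX vY] := absXY good1 hT1 hT2.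
have vE1 : V (E1 G) by have := hVZ s1^-1 vX; rewrite scaleK'.
have vE2 : V (E2 G) by have := hVZ s2^-1 vY; rewrite scaleK'.
have eE1 : E1 G = G.
  apply/eqP; rewrite -subr_eq0; apply/eqP; apply: hmin.
    by have := hVD vE1 (hVZ (-1) vG); rewrite scaleN1r.
  have := E1d G; move: N0; set s0 := msize G; set s3 := msize _; lia.
have eE2 : E2 G = G.
  apply/eqP; rewrite -subr_eq0; apply/eqP; apply: hmin.
    by have := hVD vE2 (hVZ (-1) vG); rewrite scaleN1r.
  have := E2d G; move: N0; set s0 := msize G; set s3 := msize _; lia.
have eG : G = (G@_0)%:MP.
  apply: const_of => i; case: (ord4P i) => ->.
  - exact: (@sh_unit_fix v0 1 0 0 0 G erefl erefl erefl erefl eE1).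
  - exact: (@sh_unit_fix v1 0 1 0 0 G erefl erefl erefl erefl eT1).
  - exact: (@sh_unit_fix v2 0 0 1 0 G erefl erefl erefl erefl eE2).
  - exact: (@sh_unit_fix v3 0 0 0 1 G erefl erefl erefl erefl eT2).
have c0 : G@_0 != 0.
  by apply: contraNneq G0 => c0; rewrite eG c0 mpolyC0.
have := hVZ (G@_0)^-1 vG.
move: (G@_0) c0 eG => c c0 eG.
rewrite eG -mul_mpolyC -mpolyCM mulVf // mpolyC1.
Qed.

End Main.

Unset Implicit Arguments. Set Strict Implicit.

Theorem proposition4p2 (R : realType) (l1 l2 s1 s2 e1 e2 : R[i])
  (V : {mpoly R[i][4]} -> Prop) :
  l1 != 0 -> l2 != 0 -> s1 != 0 -> s2 != 0 -> l1 != l2 ->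
  is_submodule l1 e1 s1 l2 e2 s2 V ->
  (exists F, V F /\ F != 0) ->
  V 1.
Proof.
move=> hl1 hl2 hs1 hs2 hl12 [hV0 [hVD [hVZ [hVL [hVH [hVI hVJ]]]]]] [F [vF F0]].
have main : forall n G, (msize G <= n)%N -> V G -> G != 0 -> V 1.
  elim=> [|n IH] G hG vG G0.
    by move: G0 hG; rewrite -msize_poly_eq0; case: (msize G).
  case: (Classical_Prop.classic (V 1)) => // nV1.
  apply: (core hVD hVZ hVI hl1 hl2 hs1 hs2 hl12 vG G0) => H vH hH.
  apply/eqP; apply/negPn/negP => H0; apply: nV1; apply: (IH H) => //.
  move: hG hH; set a := msize G; set b := msize H; lia.
exact: (main _ _ (leqnn _) vF F0).
Qed.
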